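(* Let $\langle S,L,\tau,\ell\rangle$ be a labelled Markov chain. For all $s,t\in S$, the function $\delta_{\_}(s,t):(S\to\mathcal{D}(S))\to[0,1]$ is lower semi-continuous at $\tau$: for every sequence $(\tau_n)_n$ of transition functions converging to $\tau$, $\liminf_n\delta_{\tau_n}(s,t)\ge\delta_\tau(s,t)$.
   Context: A labelled Markov chain is a tuple $\langle S,L,\tau,\ell\rangle$ with $S$ a finite set of states, $L$ a finite set of labels, $\tau:S\to\mathcal{D}(S)$ a transition function ($\mathcal{D}(X)$ = probability distributions on $X$) and $\ell:S\to L$ a labelling. For $\mu,\nu\in\mathcal{D}(X)$, $\Omega(\mu,\nu)$ is the set of couplings: distributions $\omega$ on $X\times X$ with first marginal $\mu$ and second marginal $\nu$. Transition functions are equipped with the metric $d_F(\sigma,\tau)=\max_{s,x\in S}|\sigma(s)(x)-\tau(s)(x)|$. For any transition function $\sigma$, the bisimilarity distance $\delta_\sigma:S\times S\to[0,1]$ is the least fixed point of $\Delta_\sigma$, where $\Delta_\sigma(d)(s,t)=1$ if $\ell(s)\ne\ell(t)$ and $\Delta_\sigma(d)(s,t)=\inf_{\omega\in\Omega(\sigma(s),\sigma(t))}\sum_{u,v}\omega(u,v)d(u,v)$ otherwise. *)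

(* Defs.v *)
From HB Require Import structures.
From mathcomp Require Import all_boot all_order all_algebra.
From mathcomp Require Import all_classical all_reals all_analysis.
Set Implicit Arguments. Unset Strict Implicit. Unset Printing Implicit Defensive.
Import Order.TTheory GRing.Theory Num.Theory.
Import numFieldNormedType.Exports.
Local Open Scope classical_set_scope.
Local Open Scope ring_scope.

Section LMC.
Variables (R : realType) (S L : finType).

Definition is_distr (mu : S -> R) : Prop :=
  (forall x, 0 <= mu x) /\ \sum_(x : S) mu x = 1.

Definition is_trans (sigma : S -> S -> R) : Prop :=
  forall s, is_distr (sigma s).

Definition is_coupling (mu nu : S -> R) (omega : S -> S -> R) : Prop :=
  [/\ forall u v, 0 <= omega u v,
      forall u, \sum_(v : S) omega u v = mu u &
      forall v, \sum_(u : S) omega u v = nu v].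

Definition dF (sigma tau : S -> S -> R) : R :=
  \big[Num.max/0]_(s : S) \big[Num.max/0]_(x : S) `|sigma s x - tau s x|.

Definition unit_valued (d : S -> S -> R) : Prop :=
  forall s t, 0 <= d s t <= 1.

Definition Delta (ell : S -> L) (sigma : S -> S -> R) (d : S -> S -> R)
    (s t : S) : R :=
  if ell s != ell t then 1
  else inf [set r : R | exists omega, is_coupling (sigma s) (sigma t) omega /\
                          r = \sum_(u : S) \sum_(v : S) omega u v * d u v].

Definition is_bisim_dist (ell : S -> L) (sigma : S -> S -> R)
    (delta : S -> S -> R) : Prop :=
  [/\ unit_valued delta,
      (forall s t, Delta ell sigma delta s t = delta s t) &
      forall d, unit_valued d -> (forall s t, Delta ell sigma d s t = d s t) ->
        forall s t, delta s t <= d s t].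

End LMC.

(* Main.v *)
Require Import Defs.
From HB Require Import structures.
From mathcomp Require Import all_boot all_order all_algebra.
From mathcomp Require Import all_classical all_reals all_analysis.
From mathcomp Require Import lra ring.
Import Order.TTheory GRing.Theory Num.Theory.
Import numFieldNormedType.Exports.
Local Open Scope classical_set_scope.
Local Open Scope ring_scope.
Set Implicit Arguments. Unset Strict Implicit. Unset Printing Implicit Defensive.

Lemma prod_coupling (R : realType) (S : finType) (mu nu : S -> R) :
  is_distr mu -> is_distr nu -> is_coupling mu nu (fun u v => mu u * nu v).
Proof.
move=> [mu0 mu1] [nu0 nu1]; split.
- by move=> u v; rewrite mulr_ge0.
- by move=> u; rewrite -mulr_sumr nu1 mulr1.
- by move=> v; rewrite -mulr_suml mu1 mul1r.
Qed.

Definition cset (R : realType) (S : finType) (sigma : S -> S -> R) (d : S -> S -> R) s t :=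
  [set r : R | exists omega, is_coupling (sigma s) (sigma t) omega /\
                          r = \sum_(u : S) \sum_(v : S) omega u v * d u v].

Lemma cset_n0 (R : realType) (S : finType) (sigma d : S -> S -> R) s t :
  is_trans sigma -> cset sigma d s t !=set0.
Proof.
move=> hs; eexists; exists (fun u v => sigma s u * sigma t v); split => //.
exact: prod_coupling.
Qed.

Lemma cset_lb (R : realType) (S : finType) (sigma d : S -> S -> R) s t :
  (forall u v, 0 <= d u v) -> lbound (cset sigma d s t) 0.
Proof.
move=> d0 r [om [[om0 _ _] ->]].
by apply: sumr_ge0 => u _; apply: sumr_ge0 => v _; rewrite mulr_ge0.
Qed.

Lemma Delta_ge0 (R : realType) (S L : finType) (ell : S -> L) (sigma d : S -> S -> R) s t :
  is_trans sigma -> (forall u v, 0 <= d u v) -> 0 <= Delta ell sigma d s t.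
Proof.
move=> hs d0; rewrite /Delta; case: ifP => // _.
apply: lb_le_inf; first exact: cset_n0.
exact: cset_lb.
Qed.

Lemma Delta_le_cost (R : realType) (S L : finType) (ell : S -> L) (sigma d : S -> S -> R) s t om :
  (forall u v, 0 <= d u v) -> ell s = ell t -> is_coupling (sigma s) (sigma t) om ->
  Delta ell sigma d s t <= \sum_(u : S) \sum_(v : S) om u v * d u v.
Proof.
move=> d0 e hom; rewrite /Delta e eqxx /=.
apply: ge_inf; first by exists 0; exact: cset_lb.
by exists om.
Qed.

Lemma Delta_le1 (R : realType) (S L : finType) (ell : S -> L) (sigma d : S -> S -> R) s t :
  is_trans sigma -> unit_valued d -> Delta ell sigma d s t <= 1.
Proof.
move=> hs hd; case: (boolP (ell s != ell t)) => [|/negPn/eqP e].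
  by rewrite /Delta => ->.
have d0 : forall u v, 0 <= d u v by move=> u v; case/andP: (hd u v).
have := Delta_le_cost d0 e (prod_coupling (hs s) (hs t)).
move/le_trans; apply.
have [[m0 m1] [n0 n1]] := (hs s, hs t).
rewrite -m1; apply: ler_sum => u _.
rewrite -[leRHS]mulr1 -n1 mulr_sumr; apply: ler_sum => v _.
by rewrite ler_piMr ?mulr_ge0 //; case/andP: (hd u v).
Qed.

Lemma Delta_mono (R : realType) (S L : finType) (ell : S -> L) (sigma d d' : S -> S -> R) s t :
  is_trans sigma -> (forall u v, 0 <= d u v) -> (forall u v, d u v <= d' u v) ->
  Delta ell sigma d s t <= Delta ell sigma d' s t.
Proof.
move=> hs d0 dd'; rewrite /Delta; case: ifP => // _.
apply: lb_le_inf; first exact: cset_n0.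
move=> r [om [hom ->]].
apply: le_trans (ge_inf _ _) _; first by exists 0; exact: cset_lb.
  by exists om.
have [om0 _ _] := hom.
by apply: ler_sum => u _; apply: ler_sum => v _; rewrite ler_wpM2l.
Qed.

Lemma KT (R : realType) (S L : finType) (ell : S -> L) (sigma delta : S -> S -> R) :
  is_trans sigma -> is_bisim_dist ell sigma delta ->
  forall d, unit_valued d -> (forall s t, Delta ell sigma d s t <= d s t) ->
  forall s t, delta s t <= d s t.
Proof.
move=> hs [_ _ hleast] d hd hpre.
pose P (g : S -> S -> R) := unit_valued g /\ (forall s t, Delta ell sigma g s t <= g s t).
pose E s t := [set x : R | exists g, P g /\ x = g s t].
pose d0 s t := inf (E s t).
have P1 : P (fun _ _ => 1).
  split; first by move=> ? ?; rewrite ler01 lexx.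
  by move=> s t; apply: Delta_le1 => // ? ?; rewrite ler01 lexx.
have En0 s t : E s t !=set0 by exists 1, (fun _ _ => 1).
have Elb s t : lbound (E s t) 0.
  by move=> x [g [[hg _] ->]]; case/andP: (hg s t).
have Ehl s t : has_lbound (E s t) by exists 0.
have d0le g : P g -> forall s t, d0 s t <= g s t.
  by move=> Pg s t; apply: ge_inf => //; exists g.
have d0ge0 s t : 0 <= d0 s t by apply: lb_le_inf.
have Pd0 : P d0.
  split.
    by move=> s t; rewrite d0ge0 /=; exact: (d0le _ P1).
  move=> s t; apply: lb_le_inf => // x [g [Pg ->]].
  apply: le_trans (proj2 Pg s t).
  exact: Delta_mono (d0le g Pg).
have PD : P (Delta ell sigma d0).
  split.
    move=> s t; rewrite Delta_ge0 //= Delta_le1 //; exact: Pd0.1.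
  move=> s t; apply: Delta_mono => //; last exact: Pd0.2.
  by move=> u v; exact: Delta_ge0.
have fix0 s t : Delta ell sigma d0 s t = d0 s t.
  by apply/le_anti; rewrite Pd0.2 /= d0le.
move=> s t; apply: le_trans (hleast d0 Pd0.1 fix0 s t) _.
by apply: d0le.
Qed.
Lemma ratio_fact (R : realType) (a a' : R) : 0 <= a -> 0 <= a' ->
  exists rho, [/\ 0 <= rho <= 1, rho * a' <= a & a' - rho * a' <= `|a' - a|].
Proof.
move=> a0 a'0; case: (leP a' a) => h.
  exists 1; rewrite ler01 lexx mul1r h subrr; split => //.
have a'p : 0 < a' by lra.
exists (a / a'); rewrite divfK ?gt_eqF // ler_norm lexx; split => //.
by rewrite divr_ge0 //= ler_pdivrMr // mul1r ltW.
Qed.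

Lemma perturb (R : realType) (S : finType) (mu nu mu' nu' : S -> R) (om D : S -> S -> R) :
  is_distr mu -> is_distr nu -> is_distr mu' -> is_coupling mu' nu' om -> (forall u v, 0 <= D u v <= 1) ->
  exists om', is_coupling mu nu om' /\
    \sum_(u : S) \sum_(v : S) om' u v * D u v <=
    \sum_(u : S) \sum_(v : S) om u v * D u v +
    (\sum_(u : S) `|mu' u - mu u| + \sum_(v : S) `|nu' v - nu v|).
Proof.
move=> [mu0 mu1] [nu0 nu1] [_ mu'1] [om0 omr omc] hD.
have mu'0 u : 0 <= mu' u by rewrite -omr sumr_ge0.
have nu'0 v : 0 <= nu' v by rewrite -omc sumr_ge0.
have /choice [rho hrho] : forall u, exists r : R,
    [/\ 0 <= r <= 1, r * mu' u <= mu u & mu' u - r * mu' u <= `|mu' u - mu u|].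
  by move=> u; apply: ratio_fact.
have /choice [kap hkap] : forall v, exists r : R,
    [/\ 0 <= r <= 1, r * nu' v <= nu v & nu' v - r * nu' v <= `|nu' v - nu v|].
  by move=> v; apply: ratio_fact.
pose om2 u v := om u v * (rho u * kap v).
have om2ge0 u v : 0 <= om2 u v.
  have [/andP[? _] _ _] := hrho u; have [/andP[? _] _ _] := hkap v.
  by rewrite /om2 !mulr_ge0.
have om2le u v : om2 u v <= om u v.
  have [/andP[? ?] _ _] := hrho u; have [/andP[? ?] _ _] := hkap v.
  by rewrite /om2 ler_piMr // mulr_ile1.
have row2 u : \sum_v om2 u v <= mu u.
  have [/andP[? ?] h _] := hrho u.
  apply: le_trans h; rewrite -omr mulr_sumr; apply: ler_sum => v _.
  have [/andP[? ?] _ _] := hkap v.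
  by rewrite /om2 mulrA [rho u * om u v]mulrC ler_piMr // ?mulr_ge0.
have col2 v : \sum_u om2 u v <= nu v.
  have [/andP[? ?] h _] := hkap v.
  apply: le_trans h; rewrite -omc mulr_sumr; apply: ler_sum => u _.
  have [/andP[? ?] _ _] := hrho u.
  by rewrite /om2 mulrA mulrC ler_wpM2l // ler_piMr.
pose r u := mu u - \sum_v om2 u v.
pose c v := nu v - \sum_u om2 u v.
have r0 u : 0 <= r u by rewrite subr_ge0.
have c0 v : 0 <= c v by rewrite subr_ge0.
pose m := \sum_u r u.
have m0 : 0 <= m by apply: sumr_ge0.
have mE : m = 1 - \sum_u \sum_v om2 u v by rewrite /m /r sumrB mu1.
have cE : \sum_v c v = m by rewrite mE /c sumrB nu1 (exchange_big _ _ _ _ _ (fun u v => om2 u v)).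
have rzero : m = 0 -> forall u, r u = 0.
  by move=> /eqP; rewrite psumr_eq0 // => /allP h u; apply/eqP/h; rewrite mem_index_enum.
have czero : m = 0 -> forall v, c v = 0.
  by move=> /eqP; rewrite -cE psumr_eq0 // => /allP h v; apply/eqP/h; rewrite mem_index_enum.
pose om' u v := om2 u v + r u * c v / m.
exists om'; split; [split|].
- by move=> u v; rewrite addr_ge0 // divr_ge0 // mulr_ge0.
- move=> u; rewrite big_split /= -mulr_suml -mulr_sumr cE.
  have [m0'|mn0] := eqVneq m 0.
    have := rzero m0' u; rewrite /r => /eqP; rewrite subr_eq0 => /eqP <-.
    by rewrite m0' mulr0 mul0r addr0.
  by rewrite mulfK // addrC /r subrK.
- move=> v; rewrite big_split /= -mulr_suml -mulr_suml -/m.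
  have [m0'|mn0] := eqVneq m 0.
    have := czero m0' v; rewrite /c => /eqP; rewrite subr_eq0 => /eqP <-.
    by rewrite m0' mul0r mul0r addr0.
  by rewrite mulrAC divff // mul1r addrC /c subrK.
-
  have step1 : \sum_u \sum_v om' u v * D u v <= \sum_u \sum_v om u v * D u v + m.
    rewrite /om'.
    under eq_bigr do under eq_bigr do rewrite mulrDl.
    rewrite (eq_bigr (fun u => \sum_v om2 u v * D u v + \sum_v r u * c v / m * D u v));
      last by move=> u _; rewrite big_split.
    rewrite big_split /=; apply: lerD.
      apply: ler_sum => u _; apply: ler_sum => v _.
      by case/andP: (hD u v) => ? ?; rewrite ler_wpM2r.
    apply: (@le_trans _ _ (\sum_u \sum_v r u * c v / m)).
      apply: ler_sum => u _; apply: ler_sum => v _.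
      case/andP: (hD u v) => ? ?; rewrite ler_piMr // divr_ge0 // mulr_ge0 //.
    under eq_bigr do rewrite -mulr_suml -mulr_sumr cE.
    rewrite -mulr_suml -mulr_suml -/m.
    have [->|mn0] := eqVneq m 0; first by rewrite mulr0 mul0r.
    by rewrite mulfK.
  apply: le_trans step1 _; rewrite lerD2l.
  have tot : \sum_u \sum_v om u v = 1 by rewrite -mu'1; apply: eq_bigr => u _; rewrite omr.
  have : m = \sum_u \sum_v om u v * (1 - rho u * kap v).
    rewrite mE -{1}tot -sumrB; apply: eq_bigr => u _; rewrite -sumrB.
    by apply: eq_bigr => v _; rewrite /om2; ring.
  move=> ->.
  apply: (@le_trans _ _ (\sum_u \sum_v (om u v * (1 - rho u) + om u v * (1 - kap v)))).
    apply: ler_sum => u _; apply: ler_sum => v _; rewrite -mulrDr ler_wpM2l //.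
    have [/andP[? ?] _ _] := hrho u; have [/andP[? ?] _ _] := hkap v.
    nra.
  rewrite (eq_bigr (fun u => \sum_v om u v * (1 - rho u) + \sum_v om u v * (1 - kap v)));
    last by move=> u _; rewrite big_split.
  rewrite big_split /=; apply: lerD.
    apply: ler_sum => u _; rewrite -mulr_suml omr.
    by have [_ _ h] := hrho u; rewrite mulrBr mulr1 mulrC.
  rewrite exchange_big /=; apply: ler_sum => v _; rewrite -mulr_suml omc.
  by have [_ _ h] := hkap v; rewrite mulrBr mulr1 mulrC.
Qed.

Unset Implicit Arguments.

Lemma dF_ge (R : realType) (S : finType) (sigma tau : S -> S -> R) s x :
  `|sigma s x - tau s x| <= dF sigma tau.
Proof.
rewrite /dF; apply: le_trans (le_bigmax _ _ s).
exact: (le_bigmax _ (fun x => `|sigma s x - tau s x|) x).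
Qed.

Theorem proposition1 (R : realType) (S L : finType) (ell : S -> L)
    (tau : S -> S -> R) (delta : S -> S -> R)
    (taun : nat -> S -> S -> R) (deltan : nat -> S -> S -> R) :
  is_trans tau ->
  is_bisim_dist ell tau delta ->
  (forall n, is_trans (taun n)) ->
  (forall n, is_bisim_dist ell (taun n) (deltan n)) ->
  (fun n => dF (taun n) tau) @ \oo --> (0 : R) ->
  forall s t : S,
    ((delta s t)%:E <= limn_einf (fun n => (deltan n s t)%:E))%E.
Proof.
move=> htau hdelta htaun hdeltan hcvg.
have dn01 n u v : 0 <= deltan n u v <= 1 by have [hu _ _] := hdeltan n; exact: hu.
pose x u v := fun n => (deltan n u v)%:E.
have lE u v : limn_einf (x u v) = ereal_sup (range (einfs (x u v))).
  by rewrite limn_einf_lim; apply/cvg_lim => //; exact: cvg_einfs_sup.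
have einf_ge0 u v N : (0 <= einfs (x u v) N)%E.
  by apply/ereal_infP => _ [k _ <-]; rewrite lee_fin; case/andP: (dn01 k u v).
have einf_le1 u v N : (einfs (x u v) N <= 1)%E.
  apply: ge_ereal_inf; exists (x u v N); first by exists N => /=.
  by rewrite lee_fin; case/andP: (dn01 N u v).
have l01 u v : (0 <= limn_einf (x u v) <= 1)%E.
  rewrite lE; apply/andP; split.
    by apply: le_ereal_sup_tmp; exists (einfs (x u v) 0%N) => //; exists 0%N.
  by apply/ereal_supP => _ [N _ <-].
pose dstar u v := fine (limn_einf (x u v)).
have fin01 (e : \bar R) : (0 <= e <= 1)%E -> e = (fine e)%:E.
  by case: e => [r| |] //= /andP[]; rewrite ?leye_eq ?leeNy_eq.
have dE u v : limn_einf (x u v) = (dstar u v)%:E by exact: fin01.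
have d01 : unit_valued dstar.
  by move=> u v; have := l01 u v; rewrite dE => /andP[a b]; apply/andP; split; rewrite -lee_fin; [exact: a|exact: b].
have d0 u v : 0 <= dstar u v by case/andP: (d01 u v).
have F2 u v e : 0 < e -> \forall n \near \oo, dstar u v - e <= deltan n u v.
  move=> e0; have : ((dstar u v - e)%:E < limn_einf (x u v))%E.
    by rewrite dE lte_fin ltrBlDr ltrDl.
  rewrite lE => /ereal_sup_gt [_ [N _ <-] hN]; exists N => // n /= Nn.
  rewrite -lee_fin; apply: (le_trans (ltW hN)); apply: ereal_inf_lbound; by exists n.
have F3 u v e N : 0 < e -> exists2 n, (N <= n)%N & deltan n u v < dstar u v + e.
  move=> e0; have : (einfs (x u v) N < (dstar u v + e)%:E)%E.
    apply: (@le_lt_trans _ _ (dstar u v)%:E).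
      by rewrite -dE lE; apply: ereal_sup_ubound; exists N.
    by rewrite lte_fin ltrDl.
  by move=> /ereal_inf_lt [_ [k Nk <-] hk]; exists k; rewrite // -lte_fin.
have pre s t : Delta ell tau dstar s t <= dstar s t.
  case: (boolP (ell s != ell t)) => [ne|/negPn/eqP e].
    rewrite /Delta ne; apply/ler_addgt0Pr => eps e0; have [n _ hn] := F3 s t eps 0%N e0.
    by have [_ fx _] := hdeltan n; rewrite -(fx s t) /Delta ne in hn; exact: ltW.
  apply/ler_addgt0Pr => eps e0.
  pose K : R := 3 + 2 * #|S|%:R.
  have K0 : 0 < K by rewrite /K ltr_pwDl // mulr_ge0.
  pose e' := eps / K.
  have e'0 : 0 < e' by rewrite divr_gt0.
  have [N1 _ hN1] : \forall n \near \oo, forall p : S * S, dstar p.1 p.2 - e' <= deltan n p.1 p.2.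
    by apply: filter_forall => p; apply: F2.
  have [N2 _ hN2] : \forall n \near \oo, `|0 - dF (taun n) tau| <= e'.
    by move: hcvg => /cvgr_dist_le; apply.
  have [n Nn hn] := F3 s t e' (maxn N1 N2) e'0.
  have hn1 : forall u v, dstar u v - e' <= deltan n u v.
    by move=> u v; exact: (hN1 n (leq_trans (leq_maxl _ _) Nn) (u, v)).
  have hn2 : forall s' u, `|taun n s' u - tau s' u| <= e'.
    move=> s' u; apply: (le_trans (@dF_ge _ _ (taun n) tau s' u)).
    have := hN2 n (leq_trans (leq_maxr _ _) Nn); rewrite /= sub0r normrN.
    exact: le_trans (ler_norm _).
  have [du fx _] := hdeltan n.
  have : deltan n s t < deltan n s t + e' by rewrite ltrDl.
  rewrite -{1}(fx s t) /Delta e eqxx /= => /inf_lt.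
  case/(_ (cset_n0 (deltan n) s t (htaun n))) => _ [om [hom ->]] homlt.
  have [om' [hom' cost]] := perturb (htau s) (htau t) (htaun n s) hom d01.
  have hh := Delta_le_cost d0 e hom'.
  rewrite /Delta e eqxx /= in hh; apply: (le_trans hh).
  apply: (le_trans cost).
  have [om0 omr _] := hom.
  have [_ tot] := htaun n s.
  have c1 : \sum_u \sum_v om u v * dstar u v <= \sum_u \sum_v om u v * deltan n u v + e'.
    apply: (@le_trans _ _ (\sum_u \sum_v (om u v * deltan n u v + om u v * e'))).
      apply: ler_sum => u _; apply: ler_sum => v _; rewrite -mulrDr ler_wpM2l //.
      by rewrite -lerBlDr.
    rewrite (eq_bigr (fun u => \sum_v om u v * deltan n u v + \sum_v om u v * e'));
      last by move=> u _; rewrite big_split.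
    rewrite big_split /= lerD2l.
    under eq_bigr do rewrite -mulr_suml omr.
    by rewrite -mulr_suml tot mul1r.
  have c2 (s' : S) : \sum_u `|taun n s' u - tau s' u| <= #|S|%:R * e'.
    apply: le_trans (ler_sum _ (fun u _ => hn2 s' u)) _.
    by rewrite sumr_const mulr_natl.
  have : #|S|%:R * e' = #|S|%:R * e' by [].
  have eK : eps = K * e' by rewrite /e' mulrC divfK // gt_eqF.
  rewrite eK /K.
  have := c2 s; have := c2 t.
  lra.
move=> s t; rewrite dE lee_fin; exact: (KT htau hdelta d01 pre s t).
Qed.
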